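(* Let $P\ge4$ be even and $\gamma>0$. For each $\beta'>0$ let $(\bar m,\bar q,\bar p)=(\bar m(\beta'),\bar q(\beta'),\bar p(\beta'))$ be a solution of $$\bar m=\mathbb E_x\tanh\Big[\tfrac P2\beta'\bar m^{P-1}+x\sqrt{\beta'\gamma\tfrac P2\bar p\,\bar q^{P/2-1}}\Big],\quad \bar q=\mathbb E_x\tanh^2\Big[\tfrac P2\beta'\bar m^{P-1}+x\sqrt{\beta'\gamma\tfrac P2\bar p\,\bar q^{P/2-1}}\Big],\quad \bar p=\beta'\bar q^{P/2},$$ where $x$ is a standard Gaussian. Assume that, as $\beta'\to\infty$, $\bar m(\beta')\to m_\infty$ and $\beta'(1-\bar q(\beta'))$ converges to a finite limit. Then $$m_\infty=\mathrm{erf}\Big[\tfrac12\sqrt{\tfrac P\gamma}\,m_\infty^{P-1}\Big].$$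
   Context: These are the replica-symmetric self-consistency equations of the dense Hebbian network (with $\beta'=2\beta/P!$ the rescaled inverse temperature and $\gamma$ the storage load); $\mathrm{erf}$ is the error function. *)

(* Defs.v *)
From Stdlib Require Export Reals.
From Coquelicot Require Export Coquelicot.
Open Scope R_scope.

Definition gauss_E (f : R -> R) : R :=
  RInt_gen (fun x => f x * exp (- x ^ 2 / 2) / sqrt (2 * PI))
           (Rbar_locally m_infty) (Rbar_locally p_infty).

Definition erf (z : R) : R := 2 / sqrt PI * RInt (fun t => exp (- t ^ 2)) 0 z.

(* The argument of tanh in the self-consistency equations. *)
Definition rs_field (P : nat) (gamma b m q p x : R) : R :=
  INR P / 2 * b * m ^ (P - 1)
  + x * sqrt (b * gamma * (INR P / 2) * p * q ^ (P / 2 - 1)).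

(* Main.v *)
Require Import Defs.
From Stdlib Require Import Lra Lia Psatz FunctionalExtensionality.
Open Scope R_scope.


Section Tail.
Variable h : R -> R.
Hypothesis hc : forall x, continuous h x.
Hypothesis hb : forall x, Rabs (h x) <= exp (1/2 - Rabs x).

Lemma exh a b : ex_RInt h a b.
Proof. apply (ex_RInt_continuous (V:=R_CompleteNormedModule)); intros; apply hc. Qed.

Lemma exp_le_M a b : a <= b -> exp a <= exp b.
Proof. intros H; destruct (Req_dec a b); [subst; lra| left; apply exp_increasing; lra]. Qed.

Lemma tail_pos_le u v M : M <= u -> u <= v -> Rabs (RInt h u v) <= exp (1/2 - M).
Proof.
  intros Hu Huv.
  assert (H1 : is_RInt (fun x => exp (1/2 - x)) u v
     (minus ((fun x => - exp (1/2 - x)) v) ((fun x => - exp (1/2 - x)) u))).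
  { apply (is_RInt_derive (V:=R_CompleteNormedModule) (fun x => - exp (1/2 - x))).
    - intros x _. auto_derive; auto. unfold Rminus; ring.
    - intros x _. apply (ex_derive_continuous (fun x => exp (1/2 - x))). auto_derive; auto. }
  pose proof (norm_RInt_le (V:=R_NormedModule) h (fun x => exp (1/2 - x)) u v (RInt h u v) (minus ((fun x : R => - exp (1 / 2 - x)) v) ((fun x : R => - exp (1 / 2 - x)) u)) Huv) as H2.
  assert (H3 : norm (RInt h u v) <= minus ((fun x : R => - exp (1 / 2 - x)) v) ((fun x : R => - exp (1 / 2 - x)) u)).
  { apply H2; [|apply (RInt_correct (V:=R_CompleteNormedModule)); apply exh|exact H1].
    intros x Hx. specialize (hb x). eapply Rle_trans; [exact hb|]. apply exp_le_M. pose proof (Rle_abs x); lra. }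
  unfold minus, plus, opp in H3; simpl in H3.
  assert (exp (1/2 - u) <= exp (1/2 - M)) by (apply exp_le_M; lra).
  pose proof (exp_pos (1/2 - v)). 
  change (norm (RInt h u v)) with (Rabs (RInt h u v)) in H3. lra.
Qed.

Lemma tail_neg_le u v M : u <= v -> v <= -M -> Rabs (RInt h u v) <= exp (1/2 - M).
Proof.
  intros Huv Hv.
  assert (H1 : is_RInt (fun x => exp (1/2 + x)) u v
     (minus ((fun x => exp (1/2 + x)) v) ((fun x => exp (1/2 + x)) u))).
  { apply (is_RInt_derive (V:=R_CompleteNormedModule) (fun x => exp (1/2 + x))).
    - intros x _. auto_derive; auto. ring.
    - intros x _. apply (ex_derive_continuous (fun x => exp (1/2 + x))). auto_derive; auto. }
  pose proof (norm_RInt_le (V:=R_NormedModule) h (fun x => exp (1/2 + x)) u v (RInt h u v) (minus ((fun x : R => exp (1 / 2 + x)) v) ((fun x : R => exp (1 / 2 + x)) u)) Huv) as H2.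
  assert (H3 : norm (RInt h u v) <= minus ((fun x : R => exp (1 / 2 + x)) v) ((fun x : R => exp (1 / 2 + x)) u)).
  { apply H2; [|apply (RInt_correct (V:=R_CompleteNormedModule)); apply exh|exact H1].
    intros x Hx. specialize (hb x). eapply Rle_trans; [exact hb|]. apply exp_le_M. pose proof (Rle_abs (-x)); rewrite Rabs_Ropp in H; lra. }
  unfold minus, plus, opp in H3; simpl in H3.
  assert (exp (1/2 + v) <= exp (1/2 - M)) by (apply exp_le_M; lra).
  pose proof (exp_pos (1/2 + u)).
  change (norm (RInt h u v)) with (Rabs (RInt h u v)) in H3. lra.
Qed.

Lemma RInt_swap_abs u v : Rabs (RInt h u v) = Rabs (RInt h v u).
Proof.
  rewrite <- (opp_RInt_swap (V:=R_CompleteNormedModule) h u v) by apply exh.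
  change (Rabs (RInt h u v) = Rabs (- RInt h u v)). now rewrite Rabs_Ropp.
Qed.

Lemma tail_pos u v M : M <= u -> M <= v -> Rabs (RInt h u v) <= exp (1/2 - M).
Proof.
  intros Hu Hv. destruct (Rle_dec u v).
  - now apply tail_pos_le.
  - rewrite RInt_swap_abs. apply tail_pos_le; lra.
Qed.

Lemma tail_neg u v M : u <= -M -> v <= -M -> Rabs (RInt h u v) <= exp (1/2 - M).
Proof.
  intros Hu Hv. destruct (Rle_dec u v).
  - now apply tail_neg_le.
  - rewrite RInt_swap_abs. apply tail_neg_le; lra.
Qed.

Lemma chasles3 a b c d : RInt h a d = RInt h a b + RInt h b c + RInt h c d.
Proof.
  rewrite <- (RInt_Chasles (V:=R_CompleteNormedModule) h a b d) by apply exh.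
  rewrite <- (RInt_Chasles (V:=R_CompleteNormedModule) h b c d) by apply exh.
  change (RInt h a b + (RInt h b c + RInt h c d) = RInt h a b + RInt h b c + RInt h c d). ring.
Qed.

Lemma diff_bound a b a' b' M : a <= -M -> a' <= -M -> M <= b -> M <= b' ->
  Rabs (RInt h a b - RInt h a' b') <= 2 * exp (1/2 - M).
Proof.
  intros. rewrite (chasles3 a a' b' b).
  replace (RInt h a a' + RInt h a' b' + RInt h b' b - RInt h a' b') with (RInt h a a' + RInt h b' b) by ring.
  eapply Rle_trans; [apply Rabs_triang|].
  pose proof (tail_neg a a' M H H0). pose proof (tail_pos b' b M H2 H1). lra.
Qed.

Definition FF := filter_prod (Rbar_locally m_infty) (Rbar_locally p_infty).

Lemma FF_proper : ProperFilter FF.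
Proof. apply filter_prod_proper; apply Rbar_locally_filter. Qed.

Lemma FF_far M : FF (fun ab => fst ab <= -M /\ M <= snd ab).
Proof.
  apply (Filter_prod _ _ _ (fun a => a <= -M) (fun b => M <= b)).
  - exists (-M). intros; lra.
  - exists M. intros; lra.
  - intros; simpl; auto.
Qed.

Lemma trunc_main : exists y : R, is_RInt_gen h (Rbar_locally m_infty) (Rbar_locally p_infty) y /\ (forall M, Rabs (y - RInt h (-M) M) <= 2 * exp (1/2 - M)).
Proof.
  destruct (proj1 (filterlim_locally_cauchy (U:=R_CompleteSpace) (F:=FF) (fun ab => RInt h (fst ab) (snd ab)))) as [y Hy].
  { intros eps. pose proof (cond_pos eps) as He.
    set (M := 1/2 - ln (eps/4)).
    exists (fun ab => fst ab <= -M /\ M <= snd ab). split; [apply FF_far|].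
    intros [a b] [a' b'] [H1 H2] [H3 H4]; simpl in *.
    change (Rabs (RInt h a' b' - RInt h a b) < eps).
    eapply Rle_lt_trans; [apply diff_bound; eauto|].
    unfold M. replace (1/2 - (1/2 - ln (eps/4))) with (ln (eps/4)) by ring.
    rewrite exp_ln by lra. lra. }
  exists y. split.
  - intros P HP. unfold filtermapi.
    specialize (Hy P HP). unfold filtermap in Hy.
    eapply filter_imp; [|exact Hy]. intros [a b] HPab. exists (RInt h a b). split; auto.
    apply (RInt_correct (V:=R_CompleteNormedModule)); apply exh.
  - intros M. apply Rle_plus_epsilon. intros eps He.
    assert (FP : FF (fun ab => Rabs (RInt h (fst ab) (snd ab) - y) < eps)).
    { apply (Hy (fun z => Rabs (z - y) < eps)). exists (mkposreal eps He). intros z Hz. exact Hz. }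
    destruct (filter_ex (F:=FF) _ (filter_and _ _ FP (FF_far M))) as [[a b] [Hab [Ha Hb]]].
    simpl in *. pose proof (diff_bound a b (-M) M M Ha ltac:(lra) Hb ltac:(lra)).
    replace (y - RInt h (- M) M) with ((RInt h a b - RInt h (-M) M) - (RInt h a b - y)) by ring.
    eapply Rle_trans; [apply Rabs_triang|]. rewrite Rabs_Ropp. lra.
Qed.
End Tail.


Definition phi (x : R) := exp (- x ^ 2 / 2) / sqrt (2 * PI).

Lemma sqrt2PI_ge1 : 1 <= sqrt (2 * PI).
Proof. rewrite <- sqrt_1. apply sqrt_le_1_alt. pose proof PI2_1. lra. Qed.

Lemma phi_cont x : continuous phi x.
Proof. apply (ex_derive_continuous phi). unfold phi. auto_derive. pose proof sqrt2PI_ge1; lra. Qed.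

Lemma phi_pos x : 0 <= phi x.
Proof. unfold phi. pose proof sqrt2PI_ge1. pose proof (exp_pos (- x^2/2)).
  apply Rmult_le_pos; [lra|]. left; apply Rinv_0_lt_compat; lra. Qed.

Lemma exp_gauss_bound x : exp (- x ^ 2 / 2) <= exp (1/2 - Rabs x).
Proof. apply exp_le_M. assert (x^2 = Rabs x ^2) by (rewrite pow2_abs; auto).
  rewrite H. pose proof (pow2_ge_0 (Rabs x - 1)). simpl in *. nra. Qed.

Lemma phi_le1 x : phi x <= 1.
Proof. unfold phi. pose proof sqrt2PI_ge1.
  assert (exp (- x ^ 2 / 2) <= 1). { rewrite <- exp_0. apply exp_le_M. nra. }
  pose proof (exp_pos (- x^2/2)).
  apply (Rmult_le_reg_r (sqrt (2*PI))); [lra|]. unfold Rdiv. rewrite Rmult_assoc, Rinv_l by lra. nra. Qed.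

Lemma phi_even x : phi (- x) = phi x.
Proof. unfold phi. f_equal. f_equal. f_equal. ring. Qed.

Definition hf (f : R -> R) x := f x * exp (- x ^ 2 / 2) / sqrt (2 * PI).

Lemma hf_phi f x : hf f x = f x * phi x.
Proof. unfold hf, phi, Rdiv. ring. Qed.

Lemma hf_cont f : (forall x, continuous f x) -> forall x, continuous (hf f) x.
Proof. intros Hf x. apply (continuous_ext (fun x => mult (f x) (phi x))).
  intros; rewrite hf_phi; reflexivity.
  apply (continuous_mult (K:=R_AbsRing)); [apply Hf|apply phi_cont]. Qed.

Lemma hf_bound f : (forall x, Rabs (f x) <= 1) -> forall x, Rabs (hf f x) <= exp (1/2 - Rabs x).
Proof. intros Hf x. unfold hf. pose proof sqrt2PI_ge1. pose proof (exp_pos (- x^2/2)).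
  pose proof (exp_gauss_bound x). specialize (Hf x).
  unfold Rdiv. rewrite !Rabs_mult. rewrite (Rabs_right (exp _)) by lra.
  rewrite (Rabs_right (/ sqrt (2*PI))) by (left; apply Rinv_0_lt_compat; lra).
  assert (/ sqrt (2*PI) <= 1). { rewrite <- Rinv_1. apply Rinv_le_contravar; lra. }
  assert (0 < / sqrt (2*PI)) by (apply Rinv_0_lt_compat; lra).
  pose proof (Rabs_pos (f x)).
  assert (Rabs (f x) * exp (- x^2/2) <= exp (- x^2/2)) by nra. nra. Qed.

Lemma gauss_trunc f : (forall x, continuous f x) -> (forall x, Rabs (f x) <= 1) ->
  forall M, Rabs (gauss_E f - RInt (hf f) (-M) M) <= 2 * exp (1/2 - M).
Proof.
  intros Hc Hb M.
  destruct (trunc_main (hf f) (hf_cont f Hc) (hf_bound f Hb)) as [y [Hy HM]].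
  replace (gauss_E f) with y. apply HM.
  symmetry. unfold gauss_E. apply (is_RInt_gen_unique (V:=R_CompleteNormedModule)).
  exact Hy.
Qed.


Lemma exc k a b : (forall x, continuous k x) -> ex_RInt (V:=R_NormedModule) k a b.
Proof. intros; apply (ex_RInt_continuous (V:=R_CompleteNormedModule)); intros; auto. Qed.

Lemma RInt_sub k1 k2 a b : (forall x, continuous k1 x) -> (forall x, continuous k2 x) ->
  RInt k1 a b - RInt k2 a b = RInt (fun x => k1 x - k2 x) a b.
Proof. intros H1 H2.
  pose proof (RInt_minus (V:=R_CompleteNormedModule) k1 k2 a b (exc _ _ _ H1) (exc _ _ _ H2)).
  symmetry. exact H. Qed.

Lemma RInt_add k1 k2 a b : (forall x, continuous k1 x) -> (forall x, continuous k2 x) ->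
  RInt k1 a b + RInt k2 a b = RInt (fun x => k1 x + k2 x) a b.
Proof. intros H1 H2.
  pose proof (RInt_plus (V:=R_CompleteNormedModule) k1 k2 a b (exc _ _ _ H1) (exc _ _ _ H2)).
  symmetry. exact H. Qed.

Lemma Chas k a b c : (forall x, continuous k x) -> RInt k a c = RInt k a b + RInt k b c.
Proof. intros H. symmetry. apply (RInt_Chasles (V:=R_CompleteNormedModule)); apply exc; auto. Qed.

Lemma piece_bound k a b c : (forall x, continuous k x) -> a <= b ->
  (forall x, a <= x <= b -> Rabs (k x) <= c) -> Rabs (RInt k a b) <= (b - a) * c.
Proof. intros H Hab Hk.
  apply (norm_RInt_le_const (V:=R_NormedModule) k a b _ c Hab Hk).
  apply (RInt_correct (V:=R_CompleteNormedModule)); apply exc; auto. Qed.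

Lemma phi_sym a b : RInt phi a b = RInt phi (-b) (-a).
Proof.
  pose proof (RInt_comp_lin (V:=R_CompleteNormedModule) phi (-1) 0 a b (exc _ _ _ phi_cont)) as H.
  replace (-1 * a + 0) with (-a) in H by ring. replace (-1 * b + 0) with (-b) in H by ring.
  rewrite (RInt_ext (V:=R_CompleteNormedModule) (fun y => scal (-1) (phi (-1 * y + 0))) (fun y => opp (phi y))) in H.
  2:{ intros x _. unfold scal, opp; simpl; unfold mult; simpl. replace (-1*x+0) with (-x) by ring.
      rewrite phi_even. ring. }
  rewrite (RInt_opp (V:=R_CompleteNormedModule)) in H by (apply exc, phi_cont).
  rewrite <- (opp_RInt_swap (V:=R_CompleteNormedModule) phi (-a) (-b)) by (apply exc, phi_cont).
  rewrite <- H. change (RInt phi a b = - - RInt phi a b). symmetry; apply Ropp_involutive.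
Qed.

Lemma J_eq t M : RInt phi t M - RInt phi (-M) t = RInt phi t (-t).
Proof.
  rewrite (phi_sym (-M) t). replace (- - M) with M by ring.
  rewrite (Chas phi t (-t) M) by apply phi_cont. ring.
Qed.

Lemma mid g t d e M : (forall x, continuous g x) -> (forall x, Rabs (g x) <= 1) ->
  0 < d -> 0 <= e -> -M <= t - d -> t + d <= M ->
  (forall x, t + d <= x -> Rabs (g x - 1) <= e) ->
  (forall x, x <= t - d -> Rabs (g x + 1) <= e) ->
  Rabs (RInt (hf g) (-M) M - RInt phi t (-t)) <= 4 * d + 2 * M * e.
Proof.
  intros Hc Hb Hd He HM1 HM2 Hp Hm.
  assert (Hhc := hf_cont g Hc).
  assert (Hk1 : forall x, continuous (fun x => hf g x + phi x) x).
  { intros x. apply (continuous_plus (V:=R_NormedModule) (hf g) phi); [apply Hhc| apply phi_cont]. }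
  assert (Hk2 : forall x, continuous (fun x => hf g x - phi x) x).
  { intros x. apply (continuous_minus (V:=R_NormedModule) (hf g) phi); [apply Hhc| apply phi_cont]. }
  rewrite <- (J_eq t M).
  rewrite (Chas (hf g) (-M) t M) by auto.
  replace (RInt (hf g) (- M) t + RInt (hf g) t M - (RInt phi t M - RInt phi (- M) t))
    with ((RInt (hf g) (- M) t + RInt phi (- M) t) + (RInt (hf g) t M - RInt phi t M)) by ring.
  rewrite (RInt_add (hf g) phi) by (auto; apply phi_cont).
  rewrite (RInt_sub (hf g) phi) by (auto; apply phi_cont).
  rewrite (Chas _ (-M) (t - d) t) by auto.
  rewrite (Chas _ t (t + d) M) by auto.
  assert (Hk1b : forall x, Rabs (hf g x + phi x) <= Rabs (g x + 1)).
  { intros x. rewrite hf_phi. replace (g x * phi x + phi x) with ((g x + 1) * phi x) by ring.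
    rewrite Rabs_mult. rewrite (Rabs_right (phi x)) by (apply Rle_ge, phi_pos).
    pose proof (phi_pos x); pose proof (phi_le1 x); pose proof (Rabs_pos (g x + 1)). nra. }
  assert (Hk2b : forall x, Rabs (hf g x - phi x) <= Rabs (g x - 1)).
  { intros x. rewrite hf_phi. replace (g x * phi x - phi x) with ((g x - 1) * phi x) by ring.
    rewrite Rabs_mult. rewrite (Rabs_right (phi x)) by (apply Rle_ge, phi_pos).
    pose proof (phi_pos x); pose proof (phi_le1 x); pose proof (Rabs_pos (g x - 1)). nra. }
  assert (B1 : Rabs (RInt (fun x => hf g x + phi x) (-M) (t - d)) <= (t - d - - M) * e).
  { apply piece_bound; auto; try lra. intros x Hx. eapply Rle_trans; [apply Hk1b|]. apply Hm; lra. }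
  assert (B2 : Rabs (RInt (fun x => hf g x + phi x) (t - d) t) <= (t - (t - d)) * 2).
  { apply piece_bound; auto; try lra. intros x Hx. eapply Rle_trans; [apply Hk1b|].
    eapply Rle_trans; [apply Rabs_triang|]. rewrite Rabs_R1. specialize (Hb x). lra. }
  assert (B3 : Rabs (RInt (fun x => hf g x - phi x) t (t + d)) <= (t + d - t) * 2).
  { apply piece_bound; auto; try lra. intros x Hx. eapply Rle_trans; [apply Hk2b|].
    eapply Rle_trans; [apply Rabs_triang|]. rewrite Rabs_Ropp, Rabs_R1. specialize (Hb x). lra. }
  assert (B4 : Rabs (RInt (fun x => hf g x - phi x) (t + d) M) <= (M - (t + d)) * e).
  { apply piece_bound; auto; try lra. intros x Hx. eapply Rle_trans; [apply Hk2b|]. apply Hp; lra. }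
  repeat (eapply Rle_trans; [apply Rabs_triang|]).
  eapply Rle_trans. 2:{ instantiate (1 := (t - d - - M) * e + (t - (t - d)) * 2 + ((t + d - t) * 2 + (M - (t + d)) * e)). nra. }
  assert (Rabs (RInt (fun x : R => hf g x + phi x) (- M) (t - d) + RInt (fun x : R => hf g x + phi x) (t - d) t) <= (t - d - - M) * e + (t - (t - d)) * 2)
    by (eapply Rle_trans; [apply Rabs_triang|]; lra).
  assert (Rabs (RInt (fun x : R => hf g x - phi x) t (t + d) + RInt (fun x : R => hf g x - phi x) (t + d) M) <= (t + d - t) * 2 + (M - (t + d)) * e)
    by (eapply Rle_trans; [apply Rabs_triang|]; lra).
  lra.
Qed.


Lemma J_erf t : RInt phi t (-t) = erf (- t / sqrt 2).
Proof.
  rewrite (Chas phi t 0 (-t)) by apply phi_cont.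
  rewrite (phi_sym t 0). replace (-0) with 0 by ring.
  set (u := -t).
  assert (Hs2 : 0 < sqrt 2) by (apply sqrt_lt_R0; lra).
  assert (HsP : 0 < sqrt PI) by (apply sqrt_lt_R0; pose proof PI2_1; lra).
  assert (Hss : sqrt 2 * sqrt 2 = 2) by (apply sqrt_sqrt; lra).
  pose proof (RInt_comp_lin (V:=R_CompleteNormedModule) phi (sqrt 2) 0 0 (u / sqrt 2) (exc _ _ _ phi_cont)) as H.
  replace (sqrt 2 * 0 + 0) with 0 in H by ring.
  replace (sqrt 2 * (u / sqrt 2) + 0) with u in H by (field; lra).
  rewrite <- H.
  rewrite (RInt_ext (V:=R_CompleteNormedModule) _ (fun y => scal (/ sqrt PI) (exp (- y ^ 2)))).
  2:{ intros x _. unfold scal; simpl; unfold mult; simpl. unfold phi.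
      rewrite sqrt_mult by (try lra; pose proof PI2_1; lra).
      replace (- (sqrt 2 * x + 0) ^ 2 / 2) with (- x ^ 2).
      2:{ simpl. replace ((sqrt 2 * x + 0) * ((sqrt 2 * x + 0) * 1)) with ((sqrt 2 * sqrt 2) * (x * x)) by ring.
          rewrite Hss. field. }
      change (x * (x * 1)) with (x ^ 2). field. lra. }
  rewrite (RInt_scal (V:=R_CompleteNormedModule)).
  2:{ apply exc. intros x. apply (ex_derive_continuous (fun y => exp (- y ^ 2))). auto_derive; auto. }
  unfold erf, scal; simpl; unfold mult; simpl.
  replace (- t / sqrt 2) with (u / sqrt 2) by (unfold u; field; lra).
  field. lra.
Qed.


Lemma tanh_eq y : tanh y = (exp y - exp (- y)) / (exp y + exp (- y)).
Proof. unfold tanh, sinh, cosh. pose proof (exp_pos y); pose proof (exp_pos (-y)). field. lra. Qed.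

Lemma tanh_bd y : Rabs (tanh y) <= 1.
Proof. rewrite tanh_eq. pose proof (exp_pos y); pose proof (exp_pos (-y)).
  unfold Rdiv. rewrite Rabs_mult, Rabs_inv, (Rabs_right (_ + _)) by lra.
  apply (Rmult_le_reg_r (exp y + exp (-y))); [lra|]. rewrite Rmult_assoc, Rinv_l by lra.
  rewrite Rmult_1_r, Rmult_1_l. apply Rabs_le; lra. Qed.

Lemma tanh_near1 c y : 0 <= c -> c <= y -> Rabs (tanh y - 1) <= 2 * exp (- c).
Proof. intros Hc Hy. rewrite tanh_eq.
  pose proof (exp_pos y); pose proof (exp_pos (-y)).
  assert (1 <= exp y) by (rewrite <- exp_0; apply exp_le_M; lra).
  assert (exp (-y) <= exp (-c)) by (apply exp_le_M; lra).
  replace ((exp y - exp (- y)) / (exp y + exp (- y)) - 1) with (- (2 * exp (-y) / (exp y + exp (-y)))) by (field; lra).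
  rewrite Rabs_Ropp. rewrite Rabs_right.
  2:{ apply Rle_ge. unfold Rdiv. apply Rmult_le_pos; [lra|]. left; apply Rinv_0_lt_compat; lra. }
  apply (Rmult_le_reg_r (exp y + exp (-y))); [lra|]. unfold Rdiv. rewrite Rmult_assoc, Rinv_l by lra. nra. Qed.

Lemma tanh_nearm1 c y : 0 <= c -> y <= - c -> Rabs (tanh y + 1) <= 2 * exp (- c).
Proof. intros Hc Hy. rewrite tanh_eq.
  pose proof (exp_pos y); pose proof (exp_pos (-y)).
  assert (1 <= exp (-y)) by (rewrite <- exp_0; apply exp_le_M; lra).
  assert (exp y <= exp (-c)) by (apply exp_le_M; lra).
  replace ((exp y - exp (- y)) / (exp y + exp (- y)) + 1) with (2 * exp y / (exp y + exp (-y))) by (field; lra).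
  rewrite Rabs_right.
  2:{ apply Rle_ge. unfold Rdiv. apply Rmult_le_pos; [lra|]. left; apply Rinv_0_lt_compat; lra. }
  apply (Rmult_le_reg_r (exp y + exp (-y))); [lra|]. unfold Rdiv. rewrite Rmult_assoc, Rinv_l by lra. nra. Qed.

Lemma tanh_lin_cont k s x : continuous (fun x => tanh (k * (x - s))) x.
Proof.
  apply (continuous_ext (fun x => (exp (k * (x - s)) - exp (- (k * (x - s)))) / (exp (k * (x - s)) + exp (- (k * (x - s)))))).
  { intros; symmetry; apply tanh_eq. }
  apply (ex_derive_continuous (fun x => (exp (k * (x - s)) - exp (- (k * (x - s)))) / (exp (k * (x - s)) + exp (- (k * (x - s)))))).
  auto_derive. pose proof (exp_pos (k * (x - s))); pose proof (exp_pos (- (k * (x - s)))). pose proof (exp_pos (k * (x + - s))); pose proof (exp_pos (- (k * (x + - s)))). lra.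
Qed.

Lemma approx t eta : 0 < eta -> exists d, 0 < d /\ exists K, forall k s, K <= k -> Rabs (s - t) <= d ->
  Rabs (gauss_E (fun x => tanh (k * (x - s))) - RInt phi t (-t)) <= eta.
Proof.
  intros He.
  set (M := Rmax (Rabs t + 1) (1/2 - ln (eta / 6))).
  assert (HM1 : Rabs t + 1 <= M) by apply Rmax_l.
  assert (HM2 : 1/2 - ln (eta/6) <= M) by apply Rmax_r.
  pose proof (Rabs_pos t) as Hat. pose proof (Rle_abs t). pose proof (Rle_abs (-t)) as Hmt. rewrite Rabs_Ropp in Hmt.
  set (d := Rmin (1/2) (eta / 12)).
  assert (Hd1 : d <= 1/2) by apply Rmin_l. assert (Hd2 : d <= eta/12) by apply Rmin_r.
  assert (Hd0 : 0 < d) by (apply Rmin_glb_lt; lra).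
  set (e := eta / (6 * M)).
  assert (He0 : 0 < e) by (unfold e; apply Rdiv_lt_0_compat; lra).
  exists (d / 2). split; [lra|].
  exists (Rmax 1 (2 / d * (- ln (e / 2)))). intros k s Hk Hs.
  assert (Hk1 : 1 <= k) by (eapply Rle_trans; [apply Rmax_l|exact Hk]).
  assert (Hk2 : 2 / d * (- ln (e / 2)) <= k) by (eapply Rle_trans; [apply Rmax_r|exact Hk]).
  set (c := k * (d / 2)).
  assert (Hc0 : 0 <= c) by (unfold c; apply Rmult_le_pos; lra).
  assert (Hce : 2 * exp (- c) <= e).
  { assert (- ln (e/2) <= c).
    { unfold c. apply (Rmult_le_compat_r (d/2)) in Hk2; [|lra].
      replace (2 / d * - ln (e / 2) * (d / 2)) with (- ln (e/2)) in Hk2 by (field; lra). lra. }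
    assert (exp (- c) <= exp (ln (e/2))) by (apply exp_le_M; lra).
    rewrite exp_ln in H1 by lra. lra. }
  set (g := fun x => tanh (k * (x - s))).
  assert (Hgc : forall x, continuous g x) by (intros; apply tanh_lin_cont).
  assert (Hgb : forall x, Rabs (g x) <= 1) by (intros; apply tanh_bd).
  pose proof (gauss_trunc g Hgc Hgb M) as T.
  assert (Hsd : - (d/2) <= s - t <= d/2) by (revert Hs; unfold Rabs; destruct (Rcase_abs (s - t)); intros; lra).
  pose proof (mid g t d e M Hgc Hgb Hd0 (Rlt_le _ _ He0) ltac:(lra) ltac:(lra)) as Mi.
  assert (Mi' : Rabs (RInt (hf g) (- M) M - RInt phi t (- t)) <= 4 * d + 2 * M * e).
  { apply Mi.
    - intros x Hx. unfold g. eapply Rle_trans; [apply (tanh_near1 c)|]; auto.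
      unfold c. apply Rmult_le_compat_l; lra.
    - intros x Hx. unfold g. eapply Rle_trans; [apply (tanh_nearm1 c)|]; auto.
      unfold c. replace (- (k * (d/2))) with (k * (- (d/2))) by ring. apply Rmult_le_compat_l; lra. }
  assert (2 * M * e = eta / 3) by (unfold e; field; lra).
  assert (2 * exp (1/2 - M) <= eta / 3).
  { assert (HX : exp (1/2 - M) <= exp (ln (eta/6))) by (apply exp_le_M; lra).
    rewrite exp_ln in HX by lra. lra. }
  fold g.
  replace (gauss_E g - RInt phi t (- t)) with ((gauss_E g - RInt (hf g) (- M) M) + (RInt (hf g) (- M) M - RInt phi t (- t))) by ring.
  eapply Rle_trans; [apply Rabs_triang|]. lra.
Qed.


Definition fA (P : nat) (x : R) := INR P / 2 * x ^ (P - 1).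
Definition fC (P : nat) (gamma x : R) := sqrt (gamma * (INR P / 2) * (x ^ (P / 2) * x ^ (P / 2 - 1))).

Lemma sqrt_bb b y : 0 <= b -> sqrt (b * b * y) = b * sqrt y.
Proof. intros Hb. destruct (Rle_dec 0 y).
  - rewrite sqrt_mult by nra. rewrite sqrt_square by lra. reflexivity.
  - rewrite !sqrt_neg_0 by nra. ring. Qed.

Lemma field_eq P gamma b m q x : 0 < b -> fC P gamma q <> 0 ->
  rs_field P gamma b m q (b * q ^ (P / 2)) x = (b * fC P gamma q) * (x - (- fA P m / fC P gamma q)).
Proof. intros Hb HC. unfold rs_field.
  replace (b * gamma * (INR P / 2) * (b * q ^ (P / 2)) * q ^ (P / 2 - 1))
    with (b * b * (gamma * (INR P / 2) * (q ^ (P / 2) * q ^ (P / 2 - 1)))) by ring.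
  rewrite sqrt_bb by lra. fold (fC P gamma q). unfold fA. field. auto. Qed.

Lemma eps_of (f : R -> R) (l : R) : is_lim f p_infty l -> forall eps, 0 < eps -> exists N, forall x, N < x -> Rabs (f x - l) < eps.
Proof. intros H eps He. apply is_lim_spec in H. exact (H (mkposreal eps He)). Qed.

Lemma eq_of_small a b : (forall eta, 0 < eta -> Rabs (a - b) <= 2 * eta) -> a = b.
Proof. intros H. destruct (Req_dec a b) as [|Hn]; auto.
  assert (0 < Rabs (a - b)) by (apply Rabs_pos_lt; lra).
  specialize (H (Rabs (a - b) / 4) ltac:(lra)). lra. Qed.


Theorem theorem5 (P : nat) (gamma : R)
  (m q p : R -> R) (m_inf : R) :
  Nat.Even P -> (4 <= P)%nat -> 0 < gamma ->
  (forall b, 0 < b ->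
     m b = gauss_E (fun x => tanh (rs_field P gamma b (m b) (q b) (p b) x)) /\
     q b = gauss_E (fun x => (tanh (rs_field P gamma b (m b) (q b) (p b) x)) ^ 2) /\
     p b = b * q b ^ (P / 2)) ->
  is_lim m p_infty m_inf ->
  (exists L : R, is_lim (fun b => b * (1 - q b)) p_infty L) ->
  m_inf = erf (1 / 2 * sqrt (INR P / gamma) * m_inf ^ (P - 1)).
Proof.
  intros HE HP4 Hg H Hm [L HL].
  assert (HP : 0 < INR P) by (apply lt_0_INR; lia).
  assert (Hq : is_lim q p_infty 1).
  { apply is_lim_spec. intros eps. simpl.
    destruct (eps_of _ _ HL 1 Rlt_0_1) as [N HN].
    pose proof (cond_pos eps) as He.
    exists (Rmax N (Rmax 0 ((Rabs L + 1) / eps))). intros b Hb.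
    assert (HbN : N < b) by (eapply Rle_lt_trans; [apply Rmax_l|exact Hb]).
    assert (Hb0 : 0 < b) by (eapply Rle_lt_trans; [eapply Rle_trans; [apply Rmax_l|apply Rmax_r]|exact Hb]).
    assert (Hb1 : (Rabs L + 1) / eps < b) by (eapply Rle_lt_trans; [eapply Rle_trans; [apply Rmax_r|apply Rmax_r]|exact Hb]).
    specialize (HN b HbN).
    assert (Rabs (b * (1 - q b)) < Rabs L + 1).
    { pose proof (Rabs_triang (b * (1 - q b) - L) L). replace (b * (1 - q b) - L + L) with (b * (1 - q b)) in H0 by ring. lra. }
    rewrite Rabs_mult, (Rabs_right b) in H0 by lra.
    assert (eps * b > Rabs L + 1).
    { apply (Rmult_lt_compat_l eps) in Hb1; [|lra]. replace (eps * ((Rabs L + 1) / eps)) with (Rabs L + 1) in Hb1 by (field; lra). lra. }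
    replace (q b - 1) with (- (1 - q b)) by ring. rewrite Rabs_Ropp. nra. }
  assert (HA : is_lim (fun b => fA P (m b)) p_infty (fA P m_inf)).
  { apply is_lim_comp_continuous; auto. apply (ex_derive_continuous (fA P)). unfold fA. auto_derive. auto. }
  set (C := fC P gamma 1).
  assert (HC0 : 0 < C).
  { unfold C, fC. rewrite !pow1. apply sqrt_lt_R0. nra. }
  assert (HC : is_lim (fun b => fC P gamma (q b)) p_infty C).
  { apply is_lim_comp_continuous; auto. apply (ex_derive_continuous (fC P gamma)). unfold fC. auto_derive.
    rewrite !pow1. nra. }
  set (t := - fA P m_inf / C).
  assert (Ht : is_lim (fun b => - fA P (m b) / fC P gamma (q b)) p_infty t).
  { pose proof (is_lim_div _ _ _ _ _ (is_lim_opp _ _ _ HA) HC) as Hd.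
    simpl in Hd. unfold t. unfold Rdiv. apply Hd.
    all: first [exact I | lra | (intro Heq; injection Heq; intros; lra)]. }
  assert (Hmain : m_inf = RInt phi t (- t)).
  { apply eq_of_small. intros eta Heta.
    destruct (approx t eta Heta) as [d [Hd [K HK]]].
    destruct (eps_of _ _ Hm eta Heta) as [N1 HN1].
    destruct (eps_of _ _ HC (C/2) ltac:(lra)) as [N2 HN2].
    destruct (eps_of _ _ Ht d Hd) as [N3 HN3].
    set (b := Rmax (Rmax N1 N2) (Rmax N3 (Rmax 0 (2 * Rabs K / C))) + 1).
    assert (Hb1 : N1 < b). { unfold b. pose proof (Rmax_l (Rmax N1 N2) (Rmax N3 (Rmax 0 (2 * Rabs K / C)))). pose proof (Rmax_l N1 N2). lra. }
    assert (Hb2 : N2 < b). { unfold b. pose proof (Rmax_l (Rmax N1 N2) (Rmax N3 (Rmax 0 (2 * Rabs K / C)))). pose proof (Rmax_r N1 N2). lra. }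
    assert (Hb3x : Rmax N3 (Rmax 0 (2 * Rabs K / C)) < b). { unfold b. pose proof (Rmax_r (Rmax N1 N2) (Rmax N3 (Rmax 0 (2 * Rabs K / C)))). lra. }
    assert (Hb3 : N3 < b). { pose proof (Rmax_l N3 (Rmax 0 (2 * Rabs K / C))). lra. }
    assert (Hb4 : Rmax 0 (2 * Rabs K / C) < b). { pose proof (Rmax_r N3 (Rmax 0 (2 * Rabs K / C))). lra. }
    assert (Hb0 : 0 < b). { pose proof (Rmax_l 0 (2 * Rabs K / C)). lra. }
    assert (HbK : 2 * Rabs K / C < b). { pose proof (Rmax_r 0 (2 * Rabs K / C)). lra. }
    specialize (HN1 b Hb1). specialize (HN2 b Hb2). specialize (HN3 b Hb3).
    set (Cb := fC P gamma (q b)) in *.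
    assert (HCb : C / 2 < Cb) by (revert HN2; unfold Rabs; destruct Rcase_abs; intros; lra).
    destruct (H b Hb0) as [Hmb [_ Hpb]].
    assert (Hf : (fun x => tanh (rs_field P gamma b (m b) (q b) (p b) x)) = (fun x => tanh ((b * Cb) * (x - (- fA P (m b) / Cb))))).
    { apply functional_extensionality. intros x. rewrite Hpb. rewrite field_eq; auto. change (Cb <> 0). apply Rgt_not_eq; lra. }
    rewrite Hf in Hmb.
    assert (HKb : K <= b * Cb).
    { pose proof (Rle_abs K). assert (2 * Rabs K < b * C) by (apply (Rmult_lt_compat_r C) in HbK; [|lra]; unfold Rdiv in HbK; rewrite Rmult_assoc, Rinv_l in HbK by lra; lra).
      pose proof (Rabs_pos K). nra. }
    specialize (HK (b * Cb) (- fA P (m b) / Cb) HKb ltac:(lra)).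
    rewrite <- Hmb in HK.
    replace (m_inf - RInt phi t (- t)) with ((m b - RInt phi t (- t)) - (m b - m_inf)) by ring.
    eapply Rle_trans; [apply Rabs_triang|]. rewrite Rabs_Ropp. lra. }
  rewrite Hmain at 1. rewrite J_erf. f_equal.
  unfold t, fA, C, fC. rewrite !pow1.
  assert (Hs2 : 0 < sqrt 2) by (apply sqrt_lt_R0; lra).
  assert (Hsg : 0 < sqrt gamma) by (apply sqrt_lt_R0; lra).
  assert (HsP : 0 < sqrt (INR P)) by (apply sqrt_lt_R0; lra).
  assert (Hprod : sqrt (gamma * (INR P / 2) * (1 * 1)) * sqrt 2 = sqrt gamma * sqrt (INR P)).
  { rewrite <- !sqrt_mult by nra. f_equal. field. }
  rewrite sqrt_div by lra.
  assert (sqrt (INR P) * sqrt (INR P) = INR P) by (apply sqrt_sqrt; lra).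
  assert (sqrt (gamma * (INR P / 2) * (1 * 1)) = sqrt gamma * sqrt (INR P) / sqrt 2) by (rewrite <- Hprod; field; lra).
  rewrite H1. rewrite <- H0 at 1. field. lra.
Qed.
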